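(* Let $d \geq 1$ and let $X \subset S^{\mathbb{Z}^d}$ be a countable subshift. Then there is no sequence $(x^i)_{i \in \mathbb{N}}$ of points of $X$ with $x^i \succ x^{i-1}$ for all $i \geq 1$.
   Context: A $d$-dimensional subshift is a closed subset of $S^{\mathbb{Z}^d}$ ($S$ finite, product topology) invariant under all coordinate shifts. For configurations $x,y$, $x \succcurlyeq y$ means every finite pattern occurring in $y$ also occurs in $x$ (the subpattern preorder); $x \approx y$ means $x \succcurlyeq y$ and $y \succcurlyeq x$; $x \succ y$ means $x \succcurlyeq y$ and $x \not\approx y$. *)

(* Defs.v *)
From HB Require Import structures.
From mathcomp Require Import all_boot all_order all_algebra.
Set Implicit Arguments. Unset Strict Implicit. Unset Printing Implicit Defensive.
Import GRing.Theory.
Local Open Scope ring_scope.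

Definition pos (d : nat) := {ffun 'I_d -> int}.

Definition config (d : nat) (S : finType) := pos d -> S.

Definition shift d S (v : pos d) (x : config d S) : config d S :=
  fun u => x (u + v).

Definition occurs_in d S (x y : config d S) (F : seq (pos d)) (v : pos d) :=
  exists w : pos d, forall u, u \in F -> x (u + w) = y (u + v).

Definition subpat_ge d S (x y : config d S) : Prop :=
  forall (F : seq (pos d)) (v : pos d), occurs_in x y F v.

Definition subpat_equiv d S (x y : config d S) : Prop :=
  subpat_ge x y /\ subpat_ge y x.

Definition subpat_gt d S (x y : config d S) : Prop :=
  subpat_ge x y /\ ~ subpat_equiv x y.

(* Closed in the product topology: the cylinder sets [x|_F] (F finite)
   form a base, so X is closed iff every x all of whose cylinders meet X
   lies in X. *)
Definition closed_set d S (X : config d S -> Prop) : Prop :=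
  forall x : config d S,
    (forall F : seq (pos d), exists2 y, X y & forall u, u \in F -> y u = x u) ->
    X x.

Definition shift_invariant d S (X : config d S -> Prop) : Prop :=
  forall (v : pos d) (x : config d S), X x -> X (shift v x).

Definition subshift d S (X : config d S -> Prop) : Prop :=
  closed_set X /\ shift_invariant X.

Definition countable_set T (X : T -> Prop) : Prop :=
  exists g : T -> nat, forall x y, X x -> X y -> g x = g y -> x = y.

(* Main.v *)
Require Import Defs.
From mathcomp Require Import all_boot all_order all_algebra.
From Stdlib Require Import Classical FunctionalExtensionality IndefiniteDescription.

Section Baire.
Variables (P : countType) (S : Type) (A : (P -> S) -> Prop) (g : (P -> S) -> nat).
Hypothesis Acl : forall x, (forall F : seq P, exists2 y, A y & forall u, u \in F -> y u = x u) -> A x.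
Hypothesis ginj : forall x y, A x -> A y -> g x = g y -> x = y.

Lemma baire_iso (a : P -> S) : A a ->
  exists y, A y /\ exists F : seq P, forall z, A z -> (forall u, u \in F -> z u = y u) -> z = y.
Proof.
move=> Aa; apply: NNPP => Hn.
have H : forall (y : P -> S) (F : seq P), A y -> exists z, A z /\ (forall u, u \in F -> z u = y u) /\ z <> y.
  move=> y F Ay; apply: NNPP => H1; apply: Hn; exists y; split => //; exists F => z Az Hz.
  by apply: NNPP => ne; apply: H1; exists z.
pose R n (s s' : (P -> S) * seq P) :=
  A s'.1 /\ (forall u, u \in s.2 -> s'.1 u = s.1 u) /\ {subset s.2 <= s'.2} /\
  (forall p, unpickle n = Some p -> p \in s'.2) /\
  (forall w, A w -> (forall u, u \in s'.2 -> w u = s'.1 u) -> g w <> n).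
have step : forall n s, exists s', A s.1 -> R n s s'.
  move=> n [y F]; case: (classic (A y)) => Ay; last by exists (y, F).
  have [y' [Ay' [agr gy']]] : exists y', A y' /\ (forall u, u \in F -> y' u = y u) /\ g y' <> n.
    have [z [Az [Hz nz]]] := H y F Ay.
    case: (classic (g y = n)) => gy; last by exists y.
    exists z; split=> //; split=> // gz; apply: nz; apply: ginj => //; congruence.
  pose E : seq P := if @unpickle P n is Some p then [:: p] else [::].
  have hE : forall p, unpickle n = Some p -> p \in E by move=> p; rewrite /E => ->; rewrite inE.
  case: (classic (exists a, A a /\ g a = n)) => [[b [Ab gb]]|noa].
    have [p hp] : exists p, b p <> y' p.
      apply: NNPP => hh; apply: gy'; rewrite -gb; congr g.
      by apply: functional_extensionality => p; apply: NNPP => hp; apply: hh; exists p => e; apply: hp; rewrite e.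
    exists (y', p :: F ++ E) => _; split=> //=; split=> //; split.
      by move=> u uF; rewrite inE mem_cat uF orbT.
    split; first by move=> q /hE qE; rewrite inE mem_cat qE !orbT.
    move=> w Aw hw gw; apply: hp.
    have -> : b = w by apply: ginj => //; congruence.
    by apply: hw; rewrite inE eqxx.
  exists (y', F ++ E) => _; split=> //=; split=> //; split.
    by move=> u uF; rewrite mem_cat uF.
  split; first by move=> q /hE qE; rewrite mem_cat qE orbT.
  by move=> w Aw _ gw; apply: noa; exists w.
pose f n s := proj1_sig (constructive_indefinite_description _ (step n s)).
have fP : forall n s, A s.1 -> R n s (f n s) := fun n s => proj2_sig (constructive_indefinite_description _ (step n s)).
pose st := fix st n := if n is m.+1 then f m (st m) else (a, [::]).
have stA : forall n, A (st n).1.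
  elim=> [|n IH]; first exact: Aa.
  by have [] := fP n _ IH.
have stR : forall n, R n (st n) (st n.+1) by move=> n; exact: fP (stA n).
have mono : forall m k, (m <= k)%N -> {subset (st m).2 <= (st k).2} /\
     (forall u, u \in (st m).2 -> (st k).1 u = (st m).1 u).
  move=> m k; elim: k => [|k IH].
    by rewrite leqn0 => /eqP ->.
  rewrite leq_eqVlt => /orP [/eqP ->|]; first by split.
  rewrite ltnS => /IH [s1 s2]; have [_ [a2 [s3 _]]] := stR k.
  split; first by move=> u /s1 /s3.
  by move=> u um; rewrite a2 ?s2 //; apply: s1.
pose z p := (st (pickle p).+1).1 p.
have inS : forall p, p \in (st (pickle p).+1).2.
  by move=> p; have [_ [_ [_ [h _]]]] := stR (pickle p); apply: h; rewrite pickleK.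
have zagr : forall m u, u \in (st m).2 -> z u = (st m).1 u.
  move=> m u um; rewrite /z; case: (leqP m (pickle u).+1) => hm.
    by have [_ ->] := mono _ _ hm.
  by have [_ <-] := mono _ _ (ltnW hm); last exact: inS.
have cover : forall F : seq P, exists m, {subset F <= (st m).2}.
  elim=> [|p F [m hm]]; first by exists 0%N.
  exists (maxn m (pickle p).+1) => u; rewrite inE => /orP [/eqP ->|/hm um].
    by have [h _] := mono _ (maxn m (pickle p).+1) (leq_maxr _ _); apply: h.
  by have [h _] := mono _ (maxn m (pickle p).+1) (leq_maxl _ _); apply: h.
have Az : A z.
  apply: Acl => F; have [m hm] := cover F; exists (st m).1 => // u /hm um.
  by rewrite (zagr m).
have [_ [_ [_ [_ hg]]]] := stR (g z).
by apply: (hg z Az) => // u um; rewrite (zagr (g z).+1).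
Qed.
End Baire.

Import GRing.Theory.
Local Open Scope ring_scope.

Lemma ge_refl d S (y : config d S) : subpat_ge y y.
Proof. by move=> F v; exists v. Qed.

Theorem proposition13 (d : nat) (S : finType) (X : config d S -> Prop) :
  (1 <= d)%N -> subshift X -> countable_set X ->
  ~ exists x : nat -> config d S,
      (forall i, X (x i)) /\ (forall i, subpat_gt (x i.+1) (x i)).
Proof.
move=> _ [Xcl Xsh] [g ginj] [x [Xx chain]].
pose A (y : config d S) := X y /\ forall F : seq (pos d),
  exists i w, forall u, u \in F -> y u = x i (u + w).
have Acl : forall y, (forall F : seq (pos d), exists2 z, A z & forall u, u \in F -> z u = y u) -> A y.
  move=> y H; split.
    by apply: Xcl => F; have [z [Xz _] hz] := H F; exists z.
  move=> F; have [z [_ hz] hzy] := H F; have [i [w hw]] := hz F.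
  by exists i, w => u uF; rewrite -hzy // hw.
have Ainj : forall y z, A y -> A z -> g y = g z -> y = z.
  by move=> y z [Xy _] [Xz _]; apply: ginj.
have A0 : A (x 0%N).
  by split=> // F; exists 0%N, 0 => u _; rewrite addr0.
have [y [[Xy Hy] [F isoF]]] := @baire_iso (pos d) S A g Acl Ainj _ A0.
have [i [w hw]] := Hy F.
have key : forall j, subpat_ge (x j) (x i) -> exists a, shift a (x j) = y.
  move=> j hge; have [w' hw'] := hge F w; exists w'.
  apply: isoF.
    split; first exact: Xsh.
    by move=> F'; exists j, w'.
  by move=> u uF; rewrite /shift hw' // hw.
have [a ea] := key i (@ge_refl _ _ _).
have [b eb] := key i.+1 (proj1 (chain i)).
apply: (proj2 (chain i)); split; first exact: (proj1 (chain i)).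
move=> F' v; exists (v - b + a) => u _.
have := f_equal (fun f => f (u + v - b)) (etrans ea (esym eb)).
by rewrite /shift subrK !addrA.
Qed.
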